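(* Let $G$ be a persistent graph with vertex order $<$, let $k\ge 4$, and let $p_1,\dots,p_k\in V(G)$ form an induced cycle in this order (edges $\{p_i,p_{i+1}\}$ and $\{p_k,p_1\}$). Then, after possibly cyclically shifting the indices and/or reversing the cyclic order of the indices, $p_1>p_3>p_4>\dots>p_k>p_2$.
   Context: A persistent graph is a graph $G$ together with a linear order $v_1<v_2<\dots<v_n$ on $V(G)$ such that (1) $\{v_i,v_{i+1}\}\in E(G)$ for all $i$ (a Hamiltonian path following the order); (2) X-property: for all $p<q<r<s$, if $\{p,r\}\in E(G)$ and $\{q,s\}\in E(G)$ then $\{p,s\}\in E(G)$; (3) bar-property: if $\{p,q\}\in E(G)$ and $p,q$ are not consecutive in the order, then there is a vertex $r$ with $p<r<q$ adjacent to both $p$ and $q$. *)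

(* Defs.v *)
From mathcomp Require Import all_boot.
Set Implicit Arguments. Unset Strict Implicit. Unset Printing Implicit Defensive.

(* A simple graph on vertex set 'I_n (= {0,...,n-1}); the linear vertex order
   v_1 < ... < v_n is the natural order of the ordinals. *)
Definition simple_graph (n : nat) (e : rel 'I_n) : Prop :=
  (forall u v, e u v = e v u) /\ (forall u, ~~ e u u).

Definition persistent (n : nat) (e : rel 'I_n) : Prop :=
  simple_graph e /\
  (forall u v : 'I_n, val v = (val u).+1 -> e u v) /\
  (forall p q r s : 'I_n, p < q -> q < r -> r < s -> e p r -> e q s -> e p s) /\
  (* (3) bar-property (edges written with p < q; e is symmetric) *)
  (forall p q : 'I_n, p < q -> e p q -> (val p).+1 != val q ->
     exists r : 'I_n, [/\ p < r, r < q, e p r & e r q]).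

Definition cyc_adj (k i j : nat) : bool :=
  (j == i.+1 %% k) || (i == j.+1 %% k).

Definition induced_cycle (n : nat) (e : rel 'I_n) (k : nat) (p : nat -> 'I_n) : Prop :=
  (forall i j, i < k -> j < k -> p i = p j -> i = j) /\
  (forall i j, i < k -> j < k -> e (p i) (p j) = cyc_adj k i j).

Definition cyc_index (k s : nat) (rev : bool) (i : nat) : nat :=
  if rev then (s + k - i) %% k else (s + i) %% k.

(* Main.v *)
Require Import Defs.
From mathcomp Require Import all_boot.
From mathcomp Require Import zify.


Lemma ivt_up (f : nat -> nat) v a b : a <= b -> f a < v -> v < f b ->
  (forall j, a <= j -> j <= b -> f j != v) ->
  exists j, [/\ a <= j, j < b, f j < v & v < f j.+1].
Proof.
elim: b => [|b IH] hab ha hb hne.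
  have ha0 : a = 0 by lia.
  by move: ha hb; rewrite ha0; lia.
case: (eqVneq a b.+1) => [ea|nea].
  by move: ha hb; rewrite ea; lia.
case: (ltnP (f b) v) => hfb.
  by exists b; split => //; lia.
have hv : v < f b.
  have := hne b; rewrite leq_eqVlt eq_sym.
  move=> H; have H' := H ltac:(lia) ltac:(lia). lia.
have [j [h1 h2 h3 h4]] := IH ltac:(lia) ha hv (fun j h1 h2 => hne j h1 ltac:(lia)).
by exists j; split => //; lia.
Qed.

Lemma loc (f : nat -> nat) v a b : a <= b -> f a <= v ->
  exists j, [/\ a <= j, j <= b, f j <= v & (j == b) || (v < f j.+1)].
Proof.
elim: b => [|b IH] hab ha.
  by exists a; split => //; lia.
case: (eqVneq a b.+1) => [ea|nea].
  by exists a; split => //; lia.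
case: (leqP (f b.+1) v) => hfb.
  by exists b.+1; split => //; lia.
have [j [h1 h2 h3 h4]] := IH ltac:(lia) ha.
exists j; split => //; try lia.
case/orP: h4 => [/eqP ->|->]; last by rewrite orbT.
by rewrite hfb orbT.
Qed.

Lemma inc_lt (f : nat -> nat) m : (forall j, j < m -> f j < f j.+1) ->
  forall a b, a < b -> b <= m -> f a < f b.
Proof.
move=> H a; elim=> [|b IH] hab hbm; first by [].
case: (eqVneq a b) => [->|nab]; first by apply: H.
have := IH ltac:(lia) ltac:(lia); have := H b ltac:(lia); lia.
Qed.

Lemma mono n (e : rel 'I_n) (Hsym : forall u v, e u v = e v u)
  (HX : forall p q r s : 'I_n, p < q -> q < r -> r < s -> e p r -> e q s -> e p s)
  (x : nat -> 'I_n) (m : nat)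
  (Hedge : forall j, j < m -> e (x j) (x j.+1))
  (Hinj : forall a b, a <= m -> b <= m -> (x a : nat) = x b -> a = b)
  (Hind : forall a b, a <= m -> b <= m -> a.+2 <= b -> ~~ e (x a) (x b))
  (Hns0 : forall a b, 0 < a -> a <= m -> 0 < b -> b <= m -> e (x a) (x b) ->
      x a < x 0 -> x 0 < x b -> False)
  (Hnsm : forall a b, a < m -> b < m -> e (x a) (x b) ->
      x a < x m -> x m < x b -> False)
  (Hlt : x 0 < x m) :
  forall j, j < m -> x j < x j.+1.
Proof.
have S : forall i, (forall j, j < i -> x j < x j.+1) -> forall a b, i < a -> a <= m ->
    i < b -> b <= m -> e (x a) (x b) -> x a < x i -> x i < x b -> False.
  elim=> [|i IH] Hinc a b ha ham hb hbm he h1 h2.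
    exact: (Hns0 a b).
  have hi : x i < x i.+1 by apply: Hinc.
  case: (ltnP (x i) (x a)) => hxa.
    have := HX _ _ _ _ hxa h1 h2 (Hedge i ltac:(lia)) he.
    by have := Hind i b ltac:(lia) hbm ltac:(lia); move/negbTE => ->.
  have hne : (x a : nat) != x i.
    by apply/eqP => E; have := Hinj a i ltac:(lia) ltac:(lia) E; lia.
  apply: (IH (fun j hj => Hinc j ltac:(lia)) a b) => //; lia.
suff H : forall i, i <= m -> forall j, j < i -> x j < x j.+1.
  by move=> j hj; apply: (H m).
elim=> [|i IH] him j hj; first by [].
have Hinc := IH (ltnW him).
suff hi : x i < x i.+1.
  case: (eqVneq j i) => [->//|nji]; apply: Hinc; lia.
case: (ltnP (x i) (x i.+1)) => // hle.
have hlt : x i.+1 < x i.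
  have : (x i.+1 : nat) != x i.
    by apply/eqP => E; have := Hinj i.+1 i ltac:(lia) ltac:(lia) E; lia.
  lia.
have hm : x i < x m.
  case: (ltngtP (x i) (x m)) => // h.
    have [j' [h1 h2 h3 h4]] := ivt_up (fun j => (x j : nat)) (x m) 0 i ltac:(lia) Hlt h
      (fun j _ hj => ltac:(apply/eqP => E; have := Hinj j m ltac:(lia) ltac:(lia) E; lia)).
    exfalso; apply: (Hnsm j' j'.+1) => //; [lia|lia|apply: Hedge; lia].
  by have := Hinj i m ltac:(lia) ltac:(lia) h; lia.
have [j' [h1 h2 h3 h4]] := ivt_up (fun j => (x j : nat)) (x i) i.+1 m ltac:(lia) hlt hm
  (fun j hj _ => ltac:(apply/eqP => E; have := Hinj j i ltac:(lia) ltac:(lia) E; lia)).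
exfalso; apply: (S i Hinc j' j'.+1) => //; try lia.
by apply: Hedge.
Qed.


Lemma core n (e : rel 'I_n) (He : persistent e) k (q : nat -> 'I_n) (Hk : 4 <= k)
  (Hinj : forall i j, i < k -> j < k -> (q i : nat) = q j -> i = j)
  (Hadj : forall i j, i < k -> j < k -> e (q i) (q j) =
     [|| j == i.+1, i == j.+1, (i == 0) && (j == k.-1) | (j == 0) && (i == k.-1)])
  (Hmax : forall i, i < k -> q i <= q 0) (Hor : q 1 < q k.-1) :
  [/\ q 2 < q 0, (forall i, 2 <= i -> i.+1 < k -> q i.+1 < q i) & q 1 < q k.-1].
Proof.
case: He => [[Hsym Hirr] [Hpath [HX Hbar]]].
have E : forall i j, i < k -> j < k -> e (q i) (q j) ->
    [|| j == i.+1, i == j.+1, (i == 0) && (j == k.-1) | (j == 0) && (i == k.-1)].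
  by move=> i j hi hj; rewrite Hadj.
have Ee : forall i j, i < k -> j < k ->
    [|| j == i.+1, i == j.+1, (i == 0) && (j == k.-1) | (j == 0) && (i == k.-1)] ->
    e (q i) (q j).
  by move=> i j hi hj; rewrite Hadj.
have Hne : forall i j, i < k -> j < k -> i != j -> (q i : nat) != q j.
  by move=> i j hi hj hij; apply/eqP => Eq; have := Hinj i j hi hj Eq; lia.
have Hlt0 : forall i, 0 < i -> i < k -> q i < q 0.
  by move=> i h1 h2; have := Hmax i h2; have := Hne i 0 h2 ltac:(lia) ltac:(lia); lia.
have Hmin : forall i, 2 <= i -> i <= k.-1 -> q 1 < q i.
  move=> i h2 hi; case: (ltngtP (q 1) (q i)) => // h; last first.
    by have := Hinj 1 i ltac:(lia) ltac:(lia) h; lia.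
  have [j [h1 h3 h4 h5]] := ivt_up (fun j => (q j : nat)) (q 1) i k.-1 hi h Hor
    (fun j hj hj2 => Hne j 1 ltac:(lia) ltac:(lia) ltac:(lia)).
  have := HX _ _ _ _ h4 h5 (Hlt0 j.+1 ltac:(lia) ltac:(lia))
     (Ee j j.+1 ltac:(lia) ltac:(lia) ltac:(lia)) (Ee 1 0 ltac:(lia) ltac:(lia) ltac:(lia)).
  move/(E j 0 ltac:(lia) ltac:(lia)); lia.
have NS2 : forall a b, 2 <= a -> a <= k.-1 -> 2 <= b -> b <= k.-1 ->
    e (q a) (q b) -> q a < q 2 -> q 2 < q b -> False.
  move=> a b h1 h2 h3 h4 he ha hb.
  have := HX _ _ _ _ (Hmin a h1 h2) ha hb (Ee 1 2 ltac:(lia) ltac:(lia) ltac:(lia)) he.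
  move/(E 1 b ltac:(lia) ltac:(lia)) => H.
  have : b != 2 by apply/eqP => eb; move: hb; rewrite eb; lia.
  lia.
have NSk : forall a b, 2 <= a -> a <= k.-1 -> 2 <= b -> b <= k.-1 ->
    e (q a) (q b) -> q a < q k.-1 -> q k.-1 < q b -> False.
  move=> a b h1 h2 h3 h4 he ha hb.
  have := HX _ _ _ _ ha hb (Hlt0 b ltac:(lia) ltac:(lia)) he
    (Ee k.-1 0 ltac:(lia) ltac:(lia) ltac:(lia)).
  move/(E a 0 ltac:(lia) ltac:(lia)) => H.
  have : a != k.-1 by apply/eqP => ea; move: ha; rewrite ea; lia.
  lia.
have [h2k|h2k] : q 2 < q k.-1 \/ q k.-1 < q 2.
  by have := Hne 2 k.-1 ltac:(lia) ltac:(lia) ltac:(lia); lia.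
-
  exfalso.
  have ek : q (k - 3).+2 = q k.-1 by congr q; lia.
  have Hlt2 : q 2 < q (k - 3).+2 by rewrite ek.
  have Hm := @mono n e Hsym HX (fun j => q j.+2) (k - 3)
    (fun j hj => Ee j.+2 j.+3 ltac:(lia) ltac:(lia) ltac:(lia))
    (fun a b ha hb Eq => ltac:(have := Hinj a.+2 b.+2 ltac:(lia) ltac:(lia) Eq; lia))
    (fun a b ha hb hab => ltac:(apply/negP => /(E a.+2 b.+2 ltac:(lia) ltac:(lia)); lia))
    (fun a b h1 h2 h3 h4 he ha hb => NS2 a.+2 b.+2 ltac:(lia) ltac:(lia) ltac:(lia) ltac:(lia) he ha hb)
    (fun a b h1 h2 he ha hb => NSk a.+2 b.+2 ltac:(lia) ltac:(lia) ltac:(lia) ltac:(lia) he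
       ltac:(rewrite -ek; exact: ha) ltac:(rewrite -ek; exact: hb))
    Hlt2.
  have Hinc : forall a b, 2 <= a -> a < b -> b <= k.-1 -> q a < q b.
    move=> a b h1 h2 h3.
    have := @inc_lt (fun j => (q j.+2 : nat)) (k - 3) Hm (a - 2) (b - 2) ltac:(lia) ltac:(lia).
    have e1 : (a - 2).+2 = a by lia.
    have e2 : (b - 2).+2 = b by lia.
    by rewrite /= e1 e2.
  have HA : forall (u : 'I_n) j, q 1 <= u -> u < q 2 -> 3 <= j -> j <= k.-1 ->
      e u (q j) -> False.
    move=> u j h1 h2 h3 h4 he.
    case: (eqVneq (u : nat) (q 1)) => hu.
      have eu : u = q 1 by apply: val_inj.
      by move: he; rewrite eu => /(E 1 j ltac:(lia) ltac:(lia)); lia.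
    have := HX _ _ _ _ (ltac:(lia) : q 1 < u) h2 (Hinc 2 j ltac:(lia) ltac:(lia) ltac:(lia))
      (Ee 1 2 ltac:(lia) ltac:(lia) ltac:(lia)) he.
    by move/(E 1 j ltac:(lia) ltac:(lia)); lia.
  have HB : forall v : 'I_n, q k.-1 < v -> v <= q 0 -> e (q 2) v -> False.
    move=> v h1 h2 he.
    case: (eqVneq (v : nat) (q 0)) => hv.
      have ev : v = q 0 by apply: val_inj.
      by move: he; rewrite ev => /(E 2 0 ltac:(lia) ltac:(lia)); lia.
    have := HX _ _ _ _ h2k h1 (ltac:(lia) : v < q 0) he
      (Ee k.-1 0 ltac:(lia) ltac:(lia) ltac:(lia)).
    by move/(E 2 0 ltac:(lia) ltac:(lia)); lia.
  have EL : forall d (u v : 'I_n), v - u <= d -> q 1 <= u -> u < q 2 ->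
      q k.-1 < v -> v <= q 0 -> e u v -> False.
    elim=> [|d IH] u v hd h1 h2 h3 h4 he; first lia.
    have [r [hur hrv eur erv]] := Hbar u v ltac:(lia) he (ltac:(lia) : (u : nat).+1 != v).
    case: (ltnP r (q 2)) => hr2.
      exact: (IH r v ltac:(lia) ltac:(lia) hr2 h3 h4 erv).
    case: (ltnP (q k.-1) r) => hrk.
      exact: (IH u r ltac:(lia) h1 h2 hrk ltac:(lia) eur).
    have [j [hj1 hj2 hj3 hj4]] := loc (fun j => (q j : nat)) r 2 k.-1 ltac:(lia) hr2.
    move: hj3 hj4 => /= hj3 hj4.
    case: (eqVneq (r : nat) (q j)) => hrj.
      have er : r = q j by apply: val_inj.
      case: (eqVneq j 2) => [ej|nej].
        by apply: (HB v h3 h4); rewrite -ej -er.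
      by apply: (HA u j h1 h2 ltac:(lia) hj2); rewrite -er.
    have hjk : j != k.-1.
      by apply/eqP => ej; move: hj3 hrk hrj; rewrite ej; lia.
    have hr' : r < q j.+1 by move: hj4; rewrite (negbTE hjk).
    have hqj : q 2 <= q j.
      by case: (eqVneq j 2) => [->//|nj]; apply: ltnW; apply: Hinc; lia.
    have he' := HX _ _ _ _ (ltac:(lia) : u < q j) (ltac:(lia) : q j < r) hr' eur
      (Ee j j.+1 ltac:(lia) ltac:(lia) ltac:(lia)).
    exact: (HA u j.+1 h1 h2 ltac:(lia) ltac:(lia) he').
  exact: (EL (q 0 - q 1) (q 1) (q 0) (leqnn _) (leqnn _) (Hmin 2 ltac:(lia) ltac:(lia))
    (Hlt0 k.-1 ltac:(lia) ltac:(lia)) (leqnn _) (Ee 1 0 ltac:(lia) ltac:(lia) ltac:(lia))).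
- have e0 : q (k.-1 - 0) = q k.-1 by rewrite subn0.
  have em : q (k.-1 - (k - 3)) = q 2 by congr q; lia.
  have Hlt2 : q (k.-1 - 0) < q (k.-1 - (k - 3)) by rewrite e0 em.
  have Hm := @mono n e Hsym HX (fun j => q (k.-1 - j)) (k - 3)
    (fun j hj => Ee (k.-1 - j) (k.-1 - j.+1) ltac:(lia) ltac:(lia) ltac:(lia))
    (fun a b ha hb Eq => ltac:(have := Hinj (k.-1 - a) (k.-1 - b) ltac:(lia) ltac:(lia) Eq; lia))
    (fun a b ha hb hab => ltac:(apply/negP => /(E (k.-1 - a) (k.-1 - b) ltac:(lia) ltac:(lia)); lia))
    (fun a b h1 h2 h3 h4 he ha hb => NSk (k.-1 - a) (k.-1 - b) ltac:(lia) ltac:(lia) ltac:(lia) ltac:(lia) he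
       ltac:(rewrite -e0; exact: ha) ltac:(rewrite -e0; exact: hb))
    (fun a b h1 h2 he ha hb => NS2 (k.-1 - a) (k.-1 - b) ltac:(lia) ltac:(lia) ltac:(lia) ltac:(lia) he
       ltac:(rewrite -em; exact: ha) ltac:(rewrite -em; exact: hb))
    Hlt2.
  split => //.
    exact: (Hlt0 2 ltac:(lia) ltac:(lia)).
  move=> i h1 h2.
  have := Hm (k - 2 - i) ltac:(lia).
  have e1 : k.-1 - (k - 2 - i) = i.+1 by lia.
  have e2 : k.-1 - (k - 2 - i).+1 = i by lia.
  by rewrite /= e1 e2.
Qed.

Set Implicit Arguments. Unset Strict Implicit.

Lemma modE x k : 0 < k -> x < k.*2 -> x %% k = if x < k then x else x - k.
Proof.
move=> hk hx; case: ifP => h; first by rewrite modn_small.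
have h' : k <= x by rewrite leqNgt h.
rewrite -{1}(subnK h') modnDr modn_small //; lia.
Qed.

Lemma cyc_adjE k i j : 1 < k -> i < k -> j < k -> cyc_adj k i j =
  [|| j == i.+1, i == j.+1, (i == 0) && (j == k.-1) | (j == 0) && (i == k.-1)].
Proof.
move=> hk hi hj; rewrite /cyc_adj !modE; try lia.
by case: ifP => h1; case: ifP => h2; lia.
Qed.

Lemma sigmaE k s rev i : s < k -> i < k -> cyc_index k s rev i =
  if rev then (if s + k - i < k then s + k - i else s + k - i - k)
  else (if s + i < k then s + i else s + i - k).
Proof.
move=> hs hi; rewrite /cyc_index; case: rev; rewrite modE //; lia.
Qed.

Lemma sigma_lt k s rev i : 0 < k -> cyc_index k s rev i < k.
Proof. by move=> hk; rewrite /cyc_index; case: rev; rewrite ltn_pmod. Qed.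

Lemma sigma_adj k s rev i j : 1 < k -> s < k -> i < k -> j < k ->
  cyc_adj k (cyc_index k s rev i) (cyc_index k s rev j) = cyc_adj k i j.
Proof.
move=> hk hs hi hj.
rewrite !cyc_adjE ?sigma_lt //; try lia.
rewrite !sigmaE //.
by case: rev; repeat case: ifP => ?; lia.
Qed.

Lemma sigma_inj k s rev i j : s < k -> i < k -> j < k ->
  cyc_index k s rev i = cyc_index k s rev j -> i = j.
Proof.
move=> hs hi hj; rewrite !sigmaE //.
by case: rev; repeat case: ifP => ?; lia.
Qed.

Lemma argmax (f : nat -> nat) k : 0 < k -> exists s, s < k /\ forall i, i < k -> f i <= f s.
Proof.
elim: k => // [[|k] IH] _.
  by exists 0; split => // i; rewrite ltnS leqn0 => /eqP ->.
have [s [hs H]] := IH erefl.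
case: (leqP (f k.+1) (f s)) => h.
  exists s; split; first lia.
  by move=> i; rewrite ltnS leq_eqVlt => /orP [/eqP -> //|]; apply: H.
exists k.+1; split => //.
move=> i; rewrite ltnS leq_eqVlt => /orP [/eqP -> //|hi].
have := H i hi; lia.
Qed.

Theorem proposition4 (n : nat) (e : rel 'I_n) (k : nat) (p : nat -> 'I_n) :
  persistent e -> 4 <= k -> induced_cycle e k p ->
  exists (s : nat) (rev : bool), s < k /\
    let q := fun i => p (cyc_index k s rev i) in
    [/\ q 2 < q 0,
        (forall i, 2 <= i -> i.+1 < k -> q i.+1 < q i)
      & q 1 < q k.-1].
Proof.
move=> He Hk [Hinj Hadj].
have [s [hs Hs]] := argmax (fun i => (p i : nat)) (ltac:(lia) : 0 < k).
have G : forall rev, p (cyc_index k s rev 1) < p (cyc_index k s rev k.-1) ->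
  [/\ p (cyc_index k s rev 2) < p (cyc_index k s rev 0),
      (forall i, 2 <= i -> i.+1 < k -> p (cyc_index k s rev i.+1) < p (cyc_index k s rev i))
    & p (cyc_index k s rev 1) < p (cyc_index k s rev k.-1)].
  move=> rev hor.
  have hk0 : 0 < k by lia.
  apply: (@core n e He k (fun i => p (cyc_index k s rev i)) Hk) => //.
  - move=> i j hi hj /val_inj Eq.
    apply: (sigma_inj hs hi hj).
    exact: (Hinj _ _ (sigma_lt s rev i hk0) (sigma_lt s rev j hk0) Eq).
  - move=> i j hi hj.
    rewrite Hadj ?(sigma_lt s rev _ hk0) //.
    by rewrite sigma_adj //; try lia; rewrite cyc_adjE //; lia.
  - move=> i hi.
    have -> : cyc_index k s rev 0 = s.
      by rewrite (sigmaE rev hs (ltac:(lia) : 0 < k)); repeat case: ifP => ?; lia.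
    exact: (Hs _ (sigma_lt s rev i hk0)).
exists s.
have e1 : cyc_index k s true 1 = cyc_index k s false k.-1.
  rewrite (sigmaE true hs (ltac:(lia) : 1 < k)) (sigmaE false hs (ltac:(lia) : k.-1 < k)) /=.
  by repeat case: ifP => ?; lia.
have e2 : cyc_index k s true k.-1 = cyc_index k s false 1.
  rewrite (sigmaE false hs (ltac:(lia) : 1 < k)) (sigmaE true hs (ltac:(lia) : k.-1 < k)) /=.
  by repeat case: ifP => ?; lia.
have hne : (p (cyc_index k s false 1) : nat) != p (cyc_index k s false k.-1).
  apply/eqP => /val_inj /Hinj H.
  have hk0 : 0 < k by lia.
  have := H (sigma_lt s false 1 hk0) (sigma_lt s false k.-1 hk0).
  move/(sigma_inj hs (ltac:(lia) : 1 < k) (ltac:(lia) : k.-1 < k)); lia.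
case: (ltnP (p (cyc_index k s false 1)) (p (cyc_index k s false k.-1))) => h.
  by exists false; split => //; apply: G.
exists true; split => //; apply: G.
rewrite e1 e2; lia.
Qed.
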